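(* Let $M=(E,\Delta)$ be a matroid of rank $r$ that is realizable over some field, with $f$-vector $(f_0,\ldots,f_r)$. Then $f_i^2\ge f_{i-1}f_{i+1}$ for $i=1,\ldots,r-1$.
   Context: A matroid $M=(E,\Delta)$ has finite ground set $E$ and matroid complex $\Delta\subseteq 2^E$ of independent sets; $r$ is its rank. The $f$-vector is given by $f_i=\#\{A\in\Delta : |A|=i\}$. Realizable over a field $\mathbb{K}$ means the independent sets are exactly the linearly independent sublists of some list of vectors over $\mathbb{K}$ indexed by $E$. *)

(* Defs.v *)
From HB Require Import structures.
From mathcomp Require Import all_boot all_order all_algebra.
Set Implicit Arguments. Unset Strict Implicit. Unset Printing Implicit Defensive.
Import GRing.Theory.

Definition is_matroid (E : finType) (Delta : {set {set E}}) : Prop :=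
  [/\ set0 \in Delta,
      (forall A B : {set E}, B \in Delta -> A \subset B -> A \in Delta) &
      (forall A B : {set E}, A \in Delta -> B \in Delta -> #|A| < #|B| ->
         exists2 x, x \in B :\: A & x |: A \in Delta)].

Definition mrank (E : finType) (Delta : {set {set E}}) : nat :=
  \max_(A in Delta) #|A|.

Definition fvec (E : finType) (Delta : {set {set E}}) (i : nat) : nat :=
  #|[set A in Delta | #|A| == i]|.

Definition realizable_over (K : fieldType) (E : finType)
    (Delta : {set {set E}}) : Prop :=
  exists (n : nat) (v : E -> 'rV[K]_n),
    forall A : {set E}, (A \in Delta) <-> free [seq v x | x <- enum A].

Definition realizable (E : finType) (Delta : {set {set E}}) : Prop :=
  exists K : fieldType, realizable_over K Delta.

(* Main.v *)
Require Import Defs.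
From HB Require Import structures.
From mathcomp Require Import all_boot all_order all_algebra.
From mathcomp Require Import ring lra zify.
Set Implicit Arguments. Unset Strict Implicit. Unset Printing Implicit Defensive.
Import Order.TTheory GRing.Theory Num.Theory.
Local Open Scope ring_scope.

Definition bil (R : realFieldType) (V : finType) (Q : V -> V -> R) (u w : V -> R) :=
  \sum_j \sum_k Q j k * u j * w k.
Definition qf (R : realFieldType) (V : finType) (Q : V -> V -> R) (w : V -> R) := bil Q w w.
Definition Hyp (R : realFieldType) (V : finType) (Q : V -> V -> R) :=
  forall u w, 0 < qf Q u -> qf Q u * qf Q w <= bil Q u w ^+ 2.

Lemma bil_lin_r (R : realFieldType) (V : finType) (Q : V -> V -> R) u v w a b :
  bil Q u (fun k => a * v k + b * w k) = a * bil Q u v + b * bil Q u w.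
Proof.
rewrite /bil !mulr_sumr -big_split /=; apply: eq_bigr => j _.
rewrite !mulr_sumr -big_split /=; apply: eq_bigr => k _; ring.
Qed.

Lemma bil_lin_l (R : realFieldType) (V : finType) (Q : V -> V -> R) u v w a b :
  bil Q (fun k => a * v k + b * w k) u = a * bil Q v u + b * bil Q w u.
Proof.
rewrite /bil !mulr_sumr -big_split /=; apply: eq_bigr => j _.
rewrite !mulr_sumr -big_split /=; apply: eq_bigr => k _; ring.
Qed.

Lemma bil_sym (R : realFieldType) (V : finType) (Q : V -> V -> R) u w :
  (forall j k, Q j k = Q k j) -> bil Q u w = bil Q w u.
Proof.
move=> Qs; rewrite /bil exchange_big; apply: eq_bigr => j _; apply: eq_bigr => k _.
rewrite Qs; ring.
Qed.

Lemma eq_bil (R : realFieldType) (V : finType) (Q : V -> V -> R) u u' w w' :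
  (forall j, u j = u' j) -> (forall j, w j = w' j) -> bil Q u w = bil Q u' w'.
Proof.
move=> hu hw; rewrite /bil; apply: eq_bigr => j _; apply: eq_bigr => k _.
by rewrite hu hw.
Qed.

Lemma hyp_of_kernel (R : realFieldType) (V : finType) (Q : V -> V -> R) (l : V -> R) :
  (forall j k, Q j k = Q k j) ->
  (forall z, \sum_j l j * z j = 0 -> qf Q z <= 0) -> Hyp Q.
Proof.
move=> Qs hker u w Hu.
have Lu0 : \sum_j l j * u j != 0.
  apply/eqP => h; move: (hker u h); rewrite leNgt Hu //.
pose t := (\sum_j l j * w j) / \sum_j l j * u j.
pose z := fun j => 1 * w j + (- t) * u j.
have Lz : \sum_j l j * z j = 0.
  rewrite /z.
  have -> : \sum_j l j * (1 * w j + - t * u j) =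
            \sum_j l j * w j - t * \sum_j l j * u j.
    rewrite mulr_sumr -sumrB; apply: eq_bigr => j _; ring.
  by rewrite /t divfK // subrr.
have hz := hker z Lz.
have hw : forall j, w j = 1 * z j + t * u j by move=> j; rewrite /z; ring.
clearbody z.
have e1 : bil Q u w = bil Q u z + t * qf Q u.
  rewrite (eq_bil Q (fun j => erefl (u j)) hw) bil_lin_r /qf; ring.
have e2 : qf Q w = qf Q z + 2 * t * bil Q u z + t ^+ 2 * qf Q u.
  rewrite /qf (eq_bil Q hw hw) bil_lin_l !bil_lin_r (bil_sym z u Qs); ring.
rewrite e1 e2.
have h0 : qf Q u * qf Q z <= 0 by rewrite pmulr_rle0.
set B := bil Q u z; set a := qf Q u; set c := qf Q z.
have -> : a * (c + 2 * t * B + t ^+ 2 * a) = a * c + ((B + t * a) ^+ 2 - B ^+ 2) by ring.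
have : 0 <= B ^+ 2 by rewrite sqr_ge0.
move: h0; set p := a * c; set q := (B + t * a) ^+ 2; set r := B ^+ 2.
lra.
Qed.

Lemma eq_Hyp (R : realFieldType) (V : finType) (Q Q' : V -> V -> R) :
  (forall j k, Q j k = Q' j k) -> Hyp Q -> Hyp Q'.
Proof.
move=> e h u w.
have eb : forall a b, bil Q a b = bil Q' a b.
  by move=> a b; rewrite /bil; apply: eq_bigr => j _; apply: eq_bigr => k _; rewrite e.
rewrite /qf -!eb; exact: h.
Qed.

Lemma sum_enum (R : nmodType) (V : finType) (F : V -> R) :
  \sum_v F v = \sum_(a < #|V|) F (enum_val a).
Proof.
rewrite (reindex (@enum_val V (mem predT))) //.
by exists (@enum_rank V) => [a _|v _]; rewrite ?enum_valK ?enum_rankK.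
Qed.

Lemma inj_surj (R : fieldType) (V : finType) (A : V -> V -> R) :
  (forall y, (forall j, \sum_k A j k * y k = 0) -> forall j, y j = 0) ->
  forall b, exists y, forall j, \sum_k A j k * y k = b j.
Proof.
move=> inj b.
pose M : 'M[R]_#|V| := \matrix_(a, c) A (enum_val a) (enum_val c).
have Mu : M \in unitmx.
  rewrite -unitmx_tr -row_free_unit -kermx_eq0.
  apply/eqP/matrixP => i a; rewrite [in RHS]mxE.
  set u := row i (kermx M^T).
  have hu : u *m M^T = 0 by apply/sub_kermxP; rewrite row_sub.
  have ue : u 0 a = kermx M^T i a by rewrite /u [LHS]mxE.
  rewrite -ue; clearbody u.
  pose y := fun v => u 0 (enum_rank v).
  have hy : forall j, \sum_k A j k * y k = 0.
    move=> j; rewrite sum_enum.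
    have := congr1 (fun m : 'rV_#|V| => m 0 (enum_rank j)) hu.
    rewrite !mxE /= => h; apply: (etrans _ h); apply: eq_bigr => c _.
    by rewrite !mxE enum_rankK /y enum_valK mulrC.
  by have := inj y hy (enum_val a); rewrite /y enum_valK.
pose bc : 'cV[R]_#|V| := \col_a b (enum_val a).
pose Y := invmx M *m bc.
have MY : M *m Y = bc by rewrite /Y mulmxA mulmxV ?mul1mx.
exists (fun v => Y (enum_rank v) 0) => j; rewrite sum_enum.
have := congr1 (fun m : 'cV_#|V| => m (enum_rank j) 0) MY.
rewrite !mxE enum_rankK => h; apply: (etrans _ h); apply: eq_bigr => c _.
by rewrite !mxE enum_rankK enum_valK.
Qed.

Definition qv (R : realFieldType) (V : finType) (Q : V -> V -> R) (x : V -> R) j :=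
  \sum_k Q j k * x k.
Definition Dg (R : realFieldType) (V : finType) (Q : V -> V -> R) (x : V -> R) j :=
  if 0 < qv Q x j then qv Q x j / x j else 1.

Lemma sum2_eq0 (R : realFieldType) (V : finType) (F : V -> V -> R) :
  (forall j k, 0 <= F j k) -> \sum_j \sum_k F j k = 0 -> forall j k, F j k = 0.
Proof.
move=> Fnn h j k.
have h1 := psumr_eq0P (fun j _ => sumr_ge0 _ (fun k _ => Fnn j k)) h.
by have := psumr_eq0P (fun k _ => Fnn j k) (h1 j isT); apply.
Qed.

Lemma qv_ge0 (R : realFieldType) (V : finType) (Q : V -> V -> R) (x : V -> R) j :
  (forall j, 0 < x j) -> (forall j k, 0 <= Q j k) -> 0 <= qv Q x j.
Proof. by move=> xp Qn; apply: sumr_ge0 => k _; rewrite mulr_ge0 // ltW. Qed.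

Lemma qv0_row (R : realFieldType) (V : finType) (Q : V -> V -> R) (x : V -> R) j :
  (forall j, 0 < x j) -> (forall j k, 0 <= Q j k) -> ~~ (0 < qv Q x j) ->
  forall k, Q j k = 0.
Proof.
move=> xp Qn hq k.
have h0 : qv Q x j = 0.
  by apply/eqP; rewrite eq_le (qv_ge0 j xp Qn) andbT leNgt.
have := psumr_eq0P (fun k _ => mulr_ge0 (Qn j k) (ltW (xp k))) h0 (i := k) isT.
by move/eqP; rewrite mulf_eq0 (gt_eqF (xp k)) orbF => /eqP.
Qed.

Lemma Dg_gt0 (R : realFieldType) (V : finType) (Q : V -> V -> R) (x : V -> R) j :
  (forall j, 0 < x j) -> 0 < Dg Q x j.
Proof. by move=> xp; rewrite /Dg; case: ifP => // h; rewrite divr_gt0. Qed.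

Lemma lg_b (R : realFieldType) (V : finType) (x : V -> R) (Q : V -> V -> R) w :
  (forall j, 0 < x j) -> (forall j k, Q j k = Q k j) -> (forall j k, 0 <= Q j k) ->
  qf Q w <= \sum_j Dg Q x j * w j ^+ 2.
Proof.
move=> xp Qs Qn.
have step : qf Q w <= \sum_j \sum_k Q j k * (w j ^+ 2 * x k / x j + w k ^+ 2 * x j / x k) / 2.
  rewrite /qf /bil; apply: ler_sum => j _; apply: ler_sum => k _.
  have xj := xp j; have xk := xp k.
  have e : (w j ^+ 2 * x k / x j + w k ^+ 2 * x j / x k) / 2 - w j * w k
           = (w j * x k - w k * x j) ^+ 2 / (2 * x j * x k).
    field; by rewrite ?gt_eqF.
  rewrite -mulrA -subr_ge0 -mulrA -mulrBr e mulr_ge0 //.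
  by rewrite divr_ge0 ?sqr_ge0 // !mulr_ge0 // ltW.
apply: (le_trans step).
have -> : \sum_j \sum_k Q j k * (w j ^+ 2 * x k / x j + w k ^+ 2 * x j / x k) / 2
   = \sum_j (w j ^+ 2 / x j) * qv Q x j.
  have h1 : \sum_j \sum_k Q j k * (w k ^+ 2 * x j / x k) =
            \sum_j \sum_k Q j k * (w j ^+ 2 * x k / x j).
    rewrite exchange_big; apply: eq_bigr => j _; apply: eq_bigr => k _; by rewrite Qs.
  have h2 : \sum_j \sum_k Q j k * (w j ^+ 2 * x k / x j + w k ^+ 2 * x j / x k) / 2
     = (\sum_j \sum_k Q j k * (w j ^+ 2 * x k / x j) +
        \sum_j \sum_k Q j k * (w k ^+ 2 * x j / x k)) / 2.
    rewrite -big_split mulr_suml; apply: eq_bigr => j _.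
    rewrite -big_split mulr_suml; apply: eq_bigr => k _ /=; ring.
  rewrite h2 h1.
  have -> : forall a : R, (a + a) / 2 = a by move=> a; field.
  apply: eq_bigr => j _; rewrite /qv mulr_sumr; apply: eq_bigr => k _; ring.
apply: ler_sum => j _; rewrite /Dg; case: ifP => h.
  by rewrite le_eqVlt; apply/orP; left; apply/eqP; field; rewrite gt_eqF.
have -> : qv Q x j = 0.
  by apply/eqP; rewrite eq_le (qv_ge0 j xp Qn) andbT leNgt h.
by rewrite mulr0 mul1r sqr_ge0.
Qed.

Lemma lg_a (R : realFieldType) (V : finType) (x : V -> R) (Q : V -> V -> R)
  (H : V -> V -> V -> R) (c : R) :
  (forall j, 0 < x j) -> 0 < c ->
  (forall j k, 0 <= Q j k) ->
  (forall i j k, H i j k = H i k j) -> (forall i j k, 0 <= H i j k) ->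
  (forall j k, \sum_i x i * H i j k = c * Q j k) ->
  (forall i j, \sum_k H i j k * x k = c * Q i j) ->
  (forall i, Hyp (H i)) ->
  forall w, qf Q w <= \sum_i qv Q w i ^+ 2 / Dg Q x i.
Proof.
move=> xp cp Qn Hs Hn E1 E2 HH w.
have E3 : forall i, qf (H i) x = c * qv Q x i.
  move=> i; rewrite /qf /bil /qv mulr_sumr; apply: eq_bigr => j _.
  have -> : \sum_k H i j k * x j * x k = (\sum_k H i j k * x k) * x j.
    by rewrite mulr_suml; apply: eq_bigr => k _; ring.
  rewrite E2; ring.
have E4 : forall i, bil (H i) x w = c * qv Q w i.
  move=> i; rewrite /bil exchange_big /qv mulr_sumr; apply: eq_bigr => k _.
  have -> : \sum_j H i j k * x j * w k = (\sum_j H i k j * x j) * w k.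
    by rewrite mulr_suml; apply: eq_bigr => j _; rewrite Hs.
  rewrite E2; ring.
have E5 : c * qf Q w = \sum_i x i * qf (H i) w.
  rewrite /qf /bil mulr_sumr.
  have -> : \sum_i x i * (\sum_j \sum_k H i j k * w j * w k) =
            \sum_i \sum_j \sum_k x i * H i j k * w j * w k.
    apply: eq_bigr => i _; rewrite mulr_sumr; apply: eq_bigr => j _.
    rewrite mulr_sumr; apply: eq_bigr => k _; ring.
  rewrite exchange_big; apply: eq_bigr => j _.
  rewrite mulr_sumr exchange_big; apply: eq_bigr => k _.
  rewrite -!mulr_suml E1; ring.
have per : forall i, x i * qf (H i) w <= c * (qv Q w i ^+ 2 / Dg Q x i).
  move=> i; have xi := xp i; case: (boolP (0 < qv Q x i)) => hq.
  - have hH := HH i x w; rewrite E3 E4 in hH.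
    have cq : 0 < c * qv Q x i by rewrite mulr_gt0.
    have := hH cq.
    rewrite /Dg hq.
    set F := qf (H i) w; set B := qv Q w i; set q := qv Q x i.
    move=> h.
    have hF : F <= c * B ^+ 2 / q.
      rewrite ler_pdivlMr //.
      rewrite -(ler_pM2l cp); apply: (le_trans _ (le_trans h _)).
        by rewrite le_eqVlt; apply/orP; left; apply/eqP; ring.
      by rewrite le_eqVlt; apply/orP; left; apply/eqP; ring.
    have -> : c * (B ^+ 2 / (q / x i)) = x i * (c * B ^+ 2 / q).
      by field; rewrite ?gt_eqF.
    by rewrite ler_pM2l.
  - have Hi0 : forall j k, H i j k = 0.
      have h0 : \sum_j \sum_k H i j k * x j * x k = 0.
        have := E3 i; rewrite /qf /bil => ->.
        have -> : qv Q x i = 0.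
          by apply/eqP; rewrite eq_le (qv_ge0 i xp Qn) andbT leNgt.
        by rewrite mulr0.
      move=> j k.
      have := sum2_eq0 (fun j k => mulr_ge0 (mulr_ge0 (Hn i j k) (ltW (xp j))) (ltW (xp k))) h0 j k.
      by move/eqP; rewrite !mulf_eq0 !(gt_eqF (xp _)) !orbF => /eqP.
    have -> : qf (H i) w = 0.
      rewrite /qf /bil big1 // => j _; rewrite big1 // => k _; by rewrite Hi0 !mul0r.
    rewrite mulr0 mulr_ge0 ?(ltW cp) // divr_ge0 ?sqr_ge0 //.
    exact: ltW (Dg_gt0 Q i xp).
have : c * qf Q w <= c * \sum_i qv Q w i ^+ 2 / Dg Q x i.
  rewrite E5 mulr_sumr; exact: ler_sum => i _.
by rewrite ler_pM2l.
Qed.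

Definition xq (R : realFieldType) (V : finType) (Q : V -> V -> R) (x : V -> R) j :=
  if 0 < qv Q x j then x j else 0.

Lemma qv_xq (R : realFieldType) (V : finType) (Q : V -> V -> R) (x : V -> R) j :
  (forall j, 0 < x j) -> (forall j k, Q j k = Q k j) -> (forall j k, 0 <= Q j k) ->
  qv Q (xq Q x) j = qv Q x j.
Proof.
move=> xp Qs Qn; rewrite /qv; apply: eq_bigr => k _; rewrite /xq.
case: ifP => // h; rewrite Qs (qv0_row xp Qn (negbT h)); ring.
Qed.

Lemma Dg_xq (R : realFieldType) (V : finType) (Q : V -> V -> R) (x : V -> R) j :
  (forall j, 0 < x j) -> (forall j k, 0 <= Q j k) ->
  Dg Q x j * xq Q x j = qv Q x j.
Proof.
move=> xp Qn; rewrite /Dg /xq; case: ifP => h.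
  by field; rewrite gt_eqF.
rewrite mulr0; apply/esym/eqP; rewrite eq_le (qv_ge0 j xp Qn) andbT leNgt h //.
Qed.

Lemma perron (R : realFieldType) (V : finType) (x : V -> R) (Q : V -> V -> R) (y : V -> R) :
  (forall j, 0 < x j) -> (forall j k, Q j k = Q k j) -> (forall j k, 0 <= Q j k) ->
  (exists h, forall j, 0 < qv Q x j -> 0 < Q h j) ->
  (forall j, qv Q y j = Dg Q x j * y j) ->
  exists cst, forall j, y j = cst * xq Q x j.
Proof.
move=> xp Qs Qn [h hub] hy.
have yoff : forall j, ~~ (0 < qv Q x j) -> y j = 0.
  move=> j hj; have := hy j; rewrite /Dg (negbTE hj) mul1r => <-.
  by rewrite /qv big1 // => k _; rewrite (qv0_row xp Qn hj) mul0r.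
case: (pickP (fun j => 0 < qv Q x j)) => [j0 hj0 | none]; last first.
  exists 0 => j; rewrite mul0r; apply: yoff; by rewrite none.
case: (@Order.TotalTheory.arg_maxP _ R V j0 (fun j => 0 < qv Q x j) (fun i => y i / x i) hj0).
move=> js Pjs maxjs.
set cst := y js / x js.
exists cst.
pose z := fun j => cst * xq Q x j - y j.
have znn : forall j, 0 <= z j.
  move=> j; rewrite /z /xq; case: ifP => hj.
    have := maxjs j hj; rewrite /= -/cst ler_pdivrMr ?xp // => hh.
    by rewrite subr_ge0.
  by rewrite (yoff j (negbT hj)) mulr0 subrr.
have zeq : forall j, qv Q z j = Dg Q x j * z j.
  move=> j.
  have -> : qv Q z j = cst * qv Q (xq Q x) j - qv Q y j.
    rewrite /qv mulr_sumr -sumrB; apply: eq_bigr => k _; rewrite /z; ring.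
  by rewrite qv_xq // hy -Dg_xq // /z; ring.
have row0 : forall j, z j = 0 -> forall k, Q j k * z k = 0.
  move=> j zj k; have hq : qv Q z j = 0 by rewrite zeq zj mulr0.
  exact: (psumr_eq0P (fun k _ => mulr_ge0 (Qn j k) (znn k)) hq (i := k) isT).
have zjs : z js = 0 by rewrite /z /xq Pjs /cst; field; rewrite gt_eqF.
have zh : z h = 0.
  have := row0 js zjs h; move/eqP; rewrite mulf_eq0 Qs (gt_eqF (hub js Pjs)) /=.
  by move/eqP.
have zall : forall j, z j = 0.
  move=> j; case: (boolP (0 < qv Q x j)) => hj.
    by have := row0 h zh j; move/eqP; rewrite mulf_eq0 (gt_eqF (hub j hj)) /= => /eqP.
  by rewrite /z /xq (negbTE hj) (yoff j hj) mulr0 subrr.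
move=> j; have := zall j; rewrite /z => /eqP; rewrite subr_eq0 => /eqP.
by move=> ->.
Qed.

Lemma local_global (R : realFieldType) (V : finType) (x : V -> R) (Q : V -> V -> R)
  (H : V -> V -> V -> R) (c : R) :
  (forall j, 0 < x j) -> 0 < c ->
  (forall j k, Q j k = Q k j) -> (forall j k, 0 <= Q j k) ->
  (forall i j k, H i j k = H i k j) -> (forall i j k, 0 <= H i j k) ->
  (forall j k, \sum_i x i * H i j k = c * Q j k) ->
  (forall i j, \sum_k H i j k * x k = c * Q i j) ->
  (forall i, Hyp (H i)) ->
  (exists h, forall j, 0 < qv Q x j -> 0 < Q h j) ->
  Hyp Q.
Proof.
move=> xp cp Qs Qn Hs Hn E1 E2 HH hub.
apply: (hyp_of_kernel (l := qv Q x)) => // z hz.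
case: (pickP (fun j => 0 < qv Q x j)) => [j0 hj0 | none]; last first.
  rewrite /qf /bil big1 // => j _; rewrite big1 // => k _.
  by rewrite (qv0_row xp Qn (j := j)) ?none // !mul0r.
set q := qv Q x.
pose S := \sum_j xq Q x j * q j.
have Sp : 0 < S.
  rewrite /S (bigD1 j0) //= ltr_pwDl //.
    by rewrite /xq hj0 mulr_gt0.
  apply: sumr_ge0 => j _; rewrite /xq; case: ifP => h; last by rewrite mul0r.
  by rewrite mulr_ge0 ?(ltW (xp j)) ?qv_ge0.
pose A := fun j k => (if j == k then Dg Q x j else 0) - Q j k + q j * q k.
have Ae : forall y j, \sum_k A j k * y k = Dg Q x j * y j - qv Q y j + q j * \sum_k q k * y k.
  move=> y j; rewrite /A.
  have -> : \sum_k ((if j == k then Dg Q x j else 0) - Q j k + q j * q k) * y k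
     = \sum_k (if j == k then Dg Q x j else 0) * y k - \sum_k Q j k * y k
       + \sum_k q j * (q k * y k).
    rewrite -sumrB -big_split; apply: eq_bigr => k _ /=; ring.
  rewrite -mulr_sumr; congr (_ - _ + _).
  rewrite (bigD1 j) //= eqxx big1 ?addr0 // => k hk; by rewrite eq_sym (negbTE hk) mul0r.
have key : forall y, \sum_j xq Q x j * (\sum_k A j k * y k) = S * \sum_k q k * y k.
  move=> y.
  under eq_bigr => j _ do rewrite Ae.
  have -> : \sum_j xq Q x j * (Dg Q x j * y j - qv Q y j + q j * \sum_k q k * y k)
     = \sum_j (Dg Q x j * xq Q x j) * y j - \sum_j xq Q x j * qv Q y j
       + S * \sum_k q k * y k.
    rewrite /S mulr_suml -sumrB -big_split; apply: eq_bigr => j _ /=; ring.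
  have -> : \sum_j xq Q x j * qv Q y j = \sum_j q j * y j.
    rewrite /qv.
    have -> : \sum_j xq Q x j * (\sum_k Q j k * y k) = \sum_j \sum_k Q j k * xq Q x j * y k.
      apply: eq_bigr => j _; rewrite mulr_sumr; apply: eq_bigr => k _; ring.
    rewrite exchange_big; apply: eq_bigr => k _.
    rewrite -mulr_suml; congr (_ * _).
    rewrite /q -(qv_xq k xp Qs Qn) /qv; apply: eq_bigr => j _; by rewrite Qs.
  under eq_bigr => j _ do rewrite Dg_xq //.
  rewrite -/q subrr add0r //.
have inj : forall y, (forall j, \sum_k A j k * y k = 0) -> forall j, y j = 0.
  move=> y hy.
  have qy : \sum_k q k * y k = 0.
    have := key y; rewrite big1 => [|j _]; last by rewrite hy mulr0.
    move/esym/eqP; rewrite mulf_eq0 (gt_eqF Sp) /= => /eqP //.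
  have : forall j, qv Q y j = Dg Q x j * y j.
    move=> j; have := hy j; rewrite Ae qy mulr0 addr0 => /eqP; rewrite subr_eq0 => /eqP.
    by move=> ->.
  move/(perron xp Qs Qn hub) => [cst hc].
  have : cst * S = 0.
    rewrite -qy /S mulr_sumr; apply: eq_bigr => j _; rewrite hc; ring.
  move/eqP; rewrite mulf_eq0 (gt_eqF Sp) orbF => /eqP c0 j.
  by rewrite hc c0 mul0r.
have [y hy] := inj_surj inj (fun j => Dg Q x j * z j).
have qy : \sum_k q k * y k = 0.
  have e : \sum_j xq Q x j * (\sum_k A j k * y k) = 0.
    apply: (etrans _ hz); apply: eq_bigr => j _; rewrite hy mulrA (mulrC (xq Q x j)) Dg_xq //.
  move: (key y); rewrite e => /esym/eqP; rewrite mulf_eq0 (gt_eqF Sp) /= => /eqP //.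
pose bb := fun j => qv Q y j / Dg Q x j.
have zyb : forall j, z j = 1 * y j + (-1) * bb j.
  move=> j; have := hy j; rewrite Ae qy mulr0 addr0 => e.
  have Dp := Dg_gt0 Q j xp.
  have -> : z j = (Dg Q x j * z j) / Dg Q x j by field; rewrite gt_eqF.
  rewrite -e /bb; field; by rewrite gt_eqF.
have hqz : qf Q z = qf Q y - 2 * bil Q y bb + qf Q bb.
  rewrite /qf (eq_bil Q zyb zyb) bil_lin_l !bil_lin_r (bil_sym bb y Qs); ring.
have hb : bil Q y bb = \sum_j Dg Q x j * bb j ^+ 2.
  rewrite /bil exchange_big; apply: eq_bigr => k _.
  have -> : \sum_j Q j k * y j * bb k = qv Q y k * bb k.
    rewrite /qv mulr_suml; apply: eq_bigr => j _; rewrite Qs.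
    by rewrite mulrC mulrA; congr (_ * _); rewrite mulrC.
  rewrite /bb; field; by rewrite gt_eqF ?(Dg_gt0 Q k xp).
have ha := lg_a xp cp Qn Hs Hn E1 E2 HH y.
have ha' : \sum_i qv Q y i ^+ 2 / Dg Q x i = \sum_j Dg Q x j * bb j ^+ 2.
  apply: eq_bigr => j _; rewrite /bb; field; by rewrite gt_eqF ?(Dg_gt0 Q j xp).
have hb2 := lg_b bb xp Qs Qn.
rewrite hqz hb; rewrite ha' in ha.
move: ha hb2; set a := qf Q y; set b := qf Q bb; set s := \sum_j _.
lra.
Qed.

Lemma sum_option (R : nmodType) (E : finType) (F : option E -> R) :
  \sum_v F v = F None + \sum_e F (Some e).
Proof.
rewrite (bigD1 None) //=; congr (_ + _).
rewrite (reindex_omap Some id) /=; last first.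
  by move=> [e|].
by apply: eq_bigl => e; rewrite eqxx.
Qed.

Definition wt (R : realFieldType) (r a n : nat) (s : R) : R :=
  if (n + a <= r)%N then s ^+ (r - n - a) / (r - n - a)`!%:R else 0.
Definition cc (R : realFieldType) (E : finType) (Delta : {set {set E}}) (r a : nat)
  (S : {set E}) (s : R) : R :=
  \sum_(I in Delta | S \subset I) wt r a #|I| s.
Definition ny (E : finType) (L : seq (option E)) := count (fun v => v == None) L.
Definition xs (E : finType) (L : seq (option E)) : seq E := pmap id L.
Definition DD (R : realFieldType) (E : finType) (Delta : {set {set E}}) (r : nat) (s : R)
  (L : seq (option E)) : R :=
  if uniq (xs L) then cc Delta r (ny L) [set e in xs L] s else 0.
Definition xpt (R : realFieldType) (E : finType) (s : R) (v : option E) : R :=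
  if v is None then s else 1.

Lemma wt_step (R : realFieldType) r a n (s : R) :
  s * wt r a.+1 n s = (r - n - a)%:R * wt r a n s.
Proof.
rewrite /wt; case: (leqP (n + a.+1) r) => h1.
  have h2 : (n + a <= r)%N by lia.
  rewrite h2.
  have -> : (r - n - a = (r - n - a.+1).+1)%N by lia.
  set m := (r - n - a.+1)%N.
  rewrite factS natrM exprS.
  have f0 : (m`!)%:R != 0 :> R by rewrite pnatr_eq0 -lt0n fact_gt0.
  field; by rewrite f0 /= addrC natr1 pnatr_eq0.
case: ifP => h2; last by rewrite !mulr0.
have -> : (r - n - a = 0)%N by lia.
by rewrite mul0r mulr0.
Qed.

Lemma double_count (R : realFieldType) (E : finType) (Delta : {set {set E}}) (S : {set E})
  (F : {set E} -> R) :
  \sum_(e | e \notin S) \sum_(I in Delta | (e |: S) \subset I) F I =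
  \sum_(I in Delta | S \subset I) #|I :\: S|%:R * F I.
Proof.
have -> : \sum_(e | e \notin S) \sum_(I in Delta | (e |: S) \subset I) F I =
  \sum_e \sum_I (if (e \notin S) && ((I \in Delta) && ((e |: S) \subset I)) then F I else 0).
  rewrite big_mkcond; apply: eq_bigr => e _.
  case: ifP => he /=; last by rewrite big1.
  by rewrite big_mkcond.
rewrite exchange_big [RHS]big_mkcond; apply: eq_bigr => I _.
case: ifP => hI.
  move/andP: hI => [hD hS].
  rewrite mulr_natl -sumr_const [RHS]big_mkcond /=; apply: eq_bigr => e _.
  rewrite hD /= subUset sub1set hS andbT in_setD.
  by case: (e \in S); case: (e \in I); rewrite ?mul1r.
rewrite big1 // => e _.
case: ifP => // /and3P [he hD hS]; move: hI; rewrite hD /=.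
by move: hS; rewrite subUset => /andP [_ ->].
Qed.

Lemma euler_core (R : realFieldType) (E : finType) (Delta : {set {set E}}) r a
   (S : {set E}) (s : R) :
  s * cc Delta r a.+1 S s + \sum_(e | e \notin S) cc Delta r a (e |: S) s =
  (r - (a + #|S|))%:R * cc Delta r a S s.
Proof.
rewrite /cc double_count mulr_sumr -big_split mulr_sumr; apply: eq_bigr => I /andP [_ hS].
rewrite /= wt_step -mulrDl -natrD.
have hk : (#|S| <= #|I|)%N by apply: subset_leq_card.
rewrite /wt; case: ifP => h; last by rewrite !mulr0.
congr (_%:R * _).
rewrite cardsD.
have -> : (#|I :&: S| = #|S|)%N by rewrite (setIidPr hS).
lia.
Qed.

Lemma size_split (E : finType) (L : seq (option E)) : size L = (ny L + size (xs L))%N.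
Proof. elim: L => [//|[e|] L IH] /=; rewrite IH /ny /=; lia. Qed.

Lemma euler (R : realFieldType) (E : finType) (Delta : {set {set E}}) r (s : R) L :
  \sum_v xpt s v * DD Delta r s (v :: L) = (r - size L)%:R * DD Delta r s L.
Proof.
rewrite sum_option /DD /=.
case: (boolP (uniq (xs L))) => u; last first.
  rewrite !mulr0 big1 ?addr0 // => e _.
  by rewrite andbF mulr0.
rewrite /ny /= -/(ny L) add1n add0n.
have hcard : #|[set e in xs L]| = size (xs L).
  by rewrite cardsE; apply/card_uniqP.
rewrite size_split -hcard -(euler_core Delta r (ny L) [set e in xs L] s).
congr (_ + _).
rewrite [RHS]big_mkcond; apply: eq_bigr => e _ /=.
rewrite inE andbT mul1r; case: ifP => // _.
by rewrite set_cons.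
Qed.

Lemma DD_perm (R : realFieldType) (E : finType) (Delta : {set {set E}}) r (s : R) L1 L2 :
  perm_eq L1 L2 -> DD Delta r s L1 = DD Delta r s L2.
Proof.
move=> p; rewrite /DD.
have px : perm_eq (xs L1) (xs L2) by apply: perm_pmap.
rewrite (perm_uniq px).
have -> : ny L1 = ny L2 by rewrite /ny (permP p).
have -> : [set e in xs L1] = [set e in xs L2].
  by apply/setP => e; rewrite !inE (perm_mem px).
by [].
Qed.

Lemma perm_swap (T : eqType) (a b : T) L : perm_eq (a :: b :: L) (b :: a :: L).
Proof. by apply/permP => p /=; rewrite addnCA. Qed.

Lemma wt_ge0 (R : realFieldType) r a n (s : R) : 0 <= s -> 0 <= wt r a n s.
Proof.
move=> sp; rewrite /wt; case: ifP => // _.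
by rewrite divr_ge0 ?exprn_ge0 ?ler0n.
Qed.

Lemma wt_gt0 (R : realFieldType) r a n (s : R) : 0 < s -> (n + a <= r)%N -> 0 < wt r a n s.
Proof.
move=> sp h; rewrite /wt h.
by rewrite divr_gt0 ?exprn_gt0 // ltr0n fact_gt0.
Qed.

Lemma DD_ge0 (R : realFieldType) (E : finType) (Delta : {set {set E}}) r (s : R) L :
  0 <= s -> 0 <= DD Delta r s L.
Proof.
move=> sp; rewrite /DD; case: ifP => // _.
by apply: sumr_ge0 => I _; apply: wt_ge0.
Qed.

Lemma cc_pos (R : realFieldType) (E : finType) (Delta : {set {set E}}) r a S (s : R) :
  (forall A B : {set E}, B \in Delta -> A \subset B -> A \in Delta) ->
  0 <= s -> 0 < cc Delta r a S s -> S \in Delta.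
Proof.
move=> dc sp; apply: contraTT => hS.
rewrite -leNgt le_eqVlt; apply/orP; left; apply/eqP.
rewrite /cc big1 // => I /andP [hI hSI].
by move: hS; rewrite (dc _ _ hI hSI).
Qed.

Lemma hub_DD (R : realFieldType) (E : finType) (Delta : {set {set E}}) r (s : R) j L :
  (forall A B : {set E}, B \in Delta -> A \subset B -> A \in Delta) ->
  0 < s -> ((size L).+2 <= r)%N -> 0 < DD Delta r s (j :: L) ->
  0 < DD Delta r s (None :: j :: L).
Proof.
move=> dc sp hr; rewrite /DD.
have -> : xs (None :: j :: L) = xs (j :: L) by [].
have -> : ny (None :: j :: L) = (ny (j :: L)).+1 by [].
case: ifP => u; last by rewrite ltxx.
set S := [set e in xs (j :: L)].
move=> h; have hS := cc_pos dc (ltW sp) h.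
rewrite /cc (bigD1 S) /=; last by rewrite hS subxx.
rewrite ltr_pwDl //.
  apply: wt_gt0 => //.
  have : #|S| = size (xs (j :: L)) by rewrite cardsE; apply/card_uniqP.
  have := size_split (j :: L); move=> /= h1 ->.
  rewrite /ny /= in h1 *. lia.
by apply: sumr_ge0 => I _; apply: wt_ge0; apply: ltW.
Qed.

Lemma psd_equiv (R : realFieldType) (T : finType) (A : pred T) (rl : rel T) (y : T -> R) :
  (forall e, rl e e) -> (forall e f, rl e f = rl f e) ->
  (forall e f g, A e -> A f -> A g -> rl e f -> rl f g -> rl e g) ->
  0 <= \sum_e \sum_f (if A e && A f && rl e f then y e * y f else 0).
Proof.
move=> rr rs rt.
pose nn := fun e => #|[pred f | A f && rl e f]|.
pose Sm := fun e => \sum_(f | A f && rl e f) y f.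
have same : forall e f, A e -> A f -> rl e f ->
   forall g, (A g && rl e g) = (A g && rl f g).
  move=> e f Ae Af ef g; case: (boolP (A g)) => Ag //=.
  apply/idP/idP => h.
    by apply: (rt f e g) => //; rewrite rs.
  exact: (rt e f g).
have nn_pos : forall e, A e -> (0 < nn e)%N.
  by move=> e Ae; apply/card_gt0P; exists e; rewrite inE Ae rr.
have key : \sum_e \sum_f (if A e && A f && rl e f then y e * y f else 0) =
           \sum_(e | A e) Sm e ^+ 2 / (nn e)%:R.
  have h1 : \sum_(e | A e) Sm e ^+ 2 / (nn e)%:R =
            \sum_(e | A e) \sum_(f | A f && rl e f) y f * (Sm f / (nn f)%:R).
    apply: eq_bigr => e Ae; rewrite expr2 -mulrA {1}/Sm mulr_suml.
    apply: eq_bigr => f /andP [Af ef].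
    have eS : Sm e = Sm f by apply: eq_bigl => g; exact: same.
    have en : nn e = nn f by apply: eq_card => g; rewrite !inE; exact: same.
    by rewrite eS en.
  rewrite h1.
  have h2 : \sum_(e | A e) \sum_(f | A f && rl e f) y f * (Sm f / (nn f)%:R) =
            \sum_e \sum_f (if A e && A f && rl e f then y f * (Sm f / (nn f)%:R) else 0).
    rewrite big_mkcond; apply: eq_bigr => e _; case: (boolP (A e)) => Ae /=.
      by rewrite big_mkcond; apply: eq_bigr => f _.
    by rewrite big1.
  rewrite h2 [RHS]exchange_big; apply: eq_bigr => f _.
  have [Af|nAf] := boolP (A f); last first.
    by rewrite !big1 // => e _; rewrite ?andbF.
  have h3 : \sum_e (if A e && true && rl e f then y f * (Sm f / (nn f)%:R) else 0) =
            (nn f)%:R * (y f * (Sm f / (nn f)%:R)).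
    rewrite -big_mkcond /=.
    rewrite (eq_bigl (fun e => e \in [pred g | A g && rl f g])) => [|e]; last first.
      by rewrite !inE andbT rs.
    by rewrite sumr_const mulr_natl.
  rewrite h3.
  have h4 : \sum_e (if true && A e && rl f e then y f * y e else 0) = y f * Sm f.
    rewrite -big_mkcond /= /Sm mulr_sumr; apply: eq_bigl => e; by [].
  rewrite h4; field; by rewrite pnatr_eq0 -lt0n nn_pos.
rewrite key; apply: sumr_ge0 => e Ae.
by rewrite divr_ge0 ?sqr_ge0 ?ler0n.
Qed.

Lemma hyp_zero (R : realFieldType) (V : finType) (Q : V -> V -> R) :
  (forall j k, Q j k = 0) -> Hyp Q.
Proof.
move=> h0 u w; rewrite /qf /bil big1 ?ltxx // => j _.
by rewrite big1 // => k _; rewrite h0 !mul0r.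
Qed.

Lemma cc_top (R : realFieldType) (E : finType) (Delta : {set {set E}}) r a (S : {set E}) (s : R) :
  (#|S| + a = r)%N -> cc Delta r a S s = (S \in Delta)%:R.
Proof.
move=> hr.
have h : forall I : {set E}, S \subset I -> wt r a #|I| s = (I == S)%:R.
  move=> I hSI; case: (eqVneq I S) => [->|ne].
    rewrite /wt hr leqnn /=.
    have -> : (r - #|S| - a = 0)%N by lia.
    by rewrite expr0 fact0 divr1.
  rewrite /wt; case: ifP => // hle.
  have : (#|I| <= #|S|)%N by lia.
  move=> hc; have := eqEcard S I; rewrite hSI hc /= => /eqP e.
  by move: ne; rewrite e eqxx.
rewrite /cc (eq_bigr (fun I => (I == S)%:R)); last by move=> I /andP [_ hSI]; exact: h.
case: (boolP (S \in Delta)) => hS.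
  rewrite (bigD1 S) /=; last by rewrite hS subxx.
  rewrite eqxx big1 ?addr0 // => I /andP [_ ne]; by rewrite (negbTE ne).
rewrite big1 // => I /andP [hI _].
have ne : I != S by apply: contraNneq hS => <-.
by rewrite (negbTE ne).
Qed.

Lemma DD_top (R : realFieldType) (E : finType) (Delta : {set {set E}}) r (s : R) L :
  size L = r -> DD Delta r s L = if uniq (xs L) then ([set e in xs L] \in Delta)%:R else 0.
Proof.
move=> hL; rewrite /DD; case: ifP => // u.
apply: cc_top.
have : #|[set e in xs L]| = size (xs L) by rewrite cardsE; apply/card_uniqP.
move=> ->; rewrite -hL size_split; lia.
Qed.

Lemma xs_cons (E : finType) (j : option E) L :
  xs (j :: L) = (if j is Some e then [:: e] else [::]) ++ xs L.
Proof. by case: j. Qed.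

Lemma base_case (R : realFieldType) (E : finType) (Delta : {set {set E}}) r (s : R) L :
  (forall A B : {set E}, B \in Delta -> A \subset B -> A \in Delta) ->
  (forall A B : {set E}, A \in Delta -> B \in Delta -> (#|A| < #|B|)%N ->
         exists2 x, x \in B :\: A & x |: A \in Delta) ->
  0 < s -> (size L + 2 = r)%N -> Hyp (fun j k => DD Delta r s (j :: k :: L)).
Proof.
move=> dc aug sp hr.
have top : forall j k, DD Delta r s (j :: k :: L) =
    if uniq (xs (j :: k :: L)) then ([set e in xs (j :: k :: L)] \in Delta)%:R else 0.
  by move=> j k; apply: DD_top; rewrite -hr addn2.
case u: (uniq (xs L)); last first.
  apply: hyp_zero => j k; rewrite top.
  rewrite !xs_cons !cat_uniq u !andbF.
  by [].
set S := [set e in xs L].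
case: (boolP (S \in Delta)) => hS; last first.
  apply: hyp_zero => j k; rewrite top; case: ifP => // _.
  case: (boolP ([set e in xs (j :: k :: L)] \in Delta)) => // h.
  have : S \subset [set e in xs (j :: k :: L)].
    apply/subsetP => e; rewrite !inE !xs_cons !mem_cat => ->; by rewrite !orbT.
  by move/(dc _ _ h); rewrite (negbTE hS).
pose iL := fun e => (e \notin S) && (e |: S \in Delta).
pose rl := fun e f => (e == f) || ~~ (e |: (f |: S) \in Delta).
have eNN : DD Delta r s [:: None, None & L] = 1.
  by rewrite top /= u hS.
have eNS : forall e, DD Delta r s [:: None, Some e & L] = (iL e)%:R.
  move=> e; rewrite top /= u andbT set_cons /iL.
  have -> : (e \notin xs L) = (e \notin S) by rewrite inE.
  by case: (e \notin S).
have eSN : forall e, DD Delta r s [:: Some e, None & L] = (iL e)%:R.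
  by move=> e; rewrite -eNS; apply: DD_perm; apply: perm_swap.
have eSS : forall e f, DD Delta r s [:: Some e, Some f & L] = (iL e && iL f && ~~ rl e f)%:R.
  move=> e f; rewrite top /= u andbT !set_cons -/S in_cons negb_or.
  have memS : forall x, (x \in xs L) = (x \in S) by move=> x; rewrite inE.
  rewrite !memS /iL /rl.
  case: (boolP (e |: (f |: S) \in Delta)) => h; last first.
    by case: ifP; rewrite ?orbT ?andbF.
  have h1 : e |: S \in Delta.
    by apply: (dc _ _ h); rewrite setUCA subsetUr.
  have h2 : f |: S \in Delta.
    by apply: (dc _ _ h); rewrite subsetUr.
  rewrite h1 h2.
  by case: (e == f); case: (e \in S); case: (f \in S).
have rl_refl : forall e, rl e e by move=> e; rewrite /rl eqxx.
have rl_sym : forall e f, rl e f = rl f e.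
  by move=> e f; rewrite /rl eq_sym setUCA.
have rl_trans : forall e f g, iL e -> iL f -> iL g -> rl e f -> rl f g -> rl e g.
  move=> e f g /andP [eS eD] /andP [fS fD] /andP [gS gD].
  move=> hef hfg.
  case: (eqVneq e g) => [->|neg]; first exact: rl_refl.
  case: (eqVneq e f) => [ef|nef]; first by rewrite ef.
  case: (eqVneq f g) => [fg|nfg]; first by rewrite -fg.
  move: hef hfg; rewrite /rl (negbTE nef) (negbTE nfg) (negbTE neg) /= => hef hfg.
  apply/negP => hB.
  have cA : #|f |: S| = (#|S|).+1 by rewrite cardsU1 fS.
  have cB : #|e |: (g |: S)| = (#|S|).+2.
    rewrite cardsU1 [#|g |: S|]cardsU1 gS in_setU1 negb_or neg eS /=.
    by rewrite add1n.
  have hlt : (#|f |: S| < #|e |: (g |: S)|)%N by rewrite cA cB.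
  have [x] := aug _ _ fD hB hlt.
  rewrite !inE negb_or => /andP [/andP [nxf nxS]] hx.
  have : (x == e) || (x == g).
    by move: hx; rewrite (negbTE nxS) orbF.
  case/orP => /eqP ->.
    by rewrite (negbTE hef).
  by rewrite setUCA (negbTE hfg).
apply: (hyp_of_kernel (l := fun j => DD Delta r s (None :: j :: L))).
  by move=> j k; apply: DD_perm; apply: perm_swap.
move=> z hz.
pose y := fun e => z (Some e).
pose lam := \sum_e (iL e)%:R * y e.
have hz' : z None + lam = 0.
  by move: hz; rewrite sum_option eNN mul1r; under eq_bigr => e _ do rewrite eNS.
have hq : qf (fun j k => DD Delta r s (j :: k :: L)) z =
          z None ^+ 2 + 2 * z None * lam +
          \sum_e \sum_f (iL e && iL f && ~~ rl e f)%:R * y e * y f.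
  have inner : forall e, \sum_k DD Delta r s [:: Some e, k & L] * z (Some e) * z k =
     (iL e)%:R * y e * z None + \sum_f (iL e && iL f && ~~ rl e f)%:R * y e * y f.
    move=> e; rewrite sum_option eSN; congr (_ + _); apply: eq_bigr => f _; by rewrite eSS.
  have part2 : \sum_e DD Delta r s [:: None, Some e & L] * z None * z (Some e) = z None * lam.
    rewrite /lam mulr_sumr; apply: eq_bigr => e _; rewrite eNS /y; ring.
  have part3 : \sum_e \sum_k DD Delta r s [:: Some e, k & L] * z (Some e) * z k =
     z None * lam + \sum_e \sum_f (iL e && iL f && ~~ rl e f)%:R * y e * y f.
    rewrite (eq_bigr _ (fun e _ => inner e)) big_split /=; congr (_ + _).
    rewrite /lam mulr_sumr; apply: eq_bigr => e _; ring.
  rewrite /qf /bil sum_option sum_option eNN part2 part3; ring.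
have hlam : lam ^+ 2 = \sum_e \sum_f (iL e && iL f)%:R * y e * y f.
  rewrite expr2 /lam mulr_suml; apply: eq_bigr => e _.
  rewrite mulr_sumr; apply: eq_bigr => f _; rewrite -mulnb natrM /y; ring.
have hsplit : \sum_e \sum_f (iL e && iL f && ~~ rl e f)%:R * y e * y f =
   lam ^+ 2 - \sum_e \sum_f (if iL e && iL f && rl e f then y e * y f else 0).
  rewrite hlam -sumrB; apply: eq_bigr => e _; rewrite -sumrB; apply: eq_bigr => f _.
  by case: (iL e); case: (iL f); case: (rl e f); rewrite /= ?mul1r ?mul0r ?subr0 ?subrr.
have P0 := psd_equiv y rl_refl rl_sym rl_trans.
rewrite hq hsplit.
have -> : z None = - lam by apply/eqP; rewrite -subr_eq0 opprK hz'.
move: P0; set P := \sum_e _.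
move=> P0.
have -> : (- lam) ^+ 2 + 2 * - lam * lam + (lam ^+ 2 - P) = - P by ring.
by rewrite oppr_le0.
Qed.



Lemma hyp_all (R : realFieldType) (E : finType) (Delta : {set {set E}}) r (s : R) :
  (forall A B : {set E}, B \in Delta -> A \subset B -> A \in Delta) ->
  (forall A B : {set E}, A \in Delta -> B \in Delta -> (#|A| < #|B|)%N ->
         exists2 x, x \in B :\: A & x |: A \in Delta) ->
  0 < s -> forall n L, (size L + 2 + n = r)%N ->
  Hyp (fun j k => DD Delta r s (j :: k :: L)).
Proof.
move=> dc aug sp; elim=> [|n IH] L hL.
  by rewrite addn0 in hL; apply: base_case.
have xp : forall j : option E, 0 < xpt s j.
  move=> j; case: j => [e|] /=; [exact: ltr01 | exact: sp].
have eul : forall L', (size L' = (size L).+2)%N ->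
    \sum_i xpt s i * DD Delta r s (i :: L') = (r - size L - 2)%:R * DD Delta r s L'.
  move=> L' hs; rewrite euler hs; congr (_%:R * _); lia.
apply: (local_global (x := xpt s) (H := fun i j k => DD Delta r s (i :: j :: k :: L))
                     (c := (r - size L - 2)%:R)).
- exact: xp.
- rewrite ltr0n; lia.
- by move=> j k; apply: DD_perm; apply: perm_swap.
- by move=> j k; apply: DD_ge0; apply: ltW.
- by move=> i j k; apply: DD_perm; rewrite perm_cons perm_swap.
- by move=> i j k; apply: DD_ge0; apply: ltW.
- by move=> j k; apply: eul.
- move=> i j; rewrite -eul //.
  by apply: eq_bigr => k _; rewrite mulrC; congr (_ * _); apply: DD_perm;
     apply/permP => p /=; lia.
- move=> i /=. have h : (size (i :: L) + 2 + n = r)%N by rewrite -hL /= !addnS !addSn. apply: (eq_Hyp _ (IH _ h)) => j k; apply: DD_perm; apply/permP => p /=; lia.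
have h2 : ((size L).+2 <= r)%N by rewrite -hL -addn2 leq_addr.
exists None => j hj; apply: hub_DD => //.
move: hj; rewrite /qv.
have -> : \sum_k DD Delta r s [:: j, k & L] * xpt s k =
          \sum_k xpt s k * DD Delta r s (k :: j :: L).
  by apply: eq_bigr => k _; rewrite mulrC; congr (_ * _); apply: DD_perm; apply: perm_swap.
rewrite euler pmulr_rgt0 // ltr0n subn_gt0 /=; exact: h2.
Qed.

Lemma key_ineq (R : realFieldType) (E : finType) (Delta : {set {set E}}) (i : nat) (s : R) :
  (forall A B : {set E}, B \in Delta -> A \subset B -> A \in Delta) ->
  (forall A B : {set E}, A \in Delta -> B \in Delta -> (#|A| < #|B|)%N ->
         exists2 x, x \in B :\: A & x |: A \in Delta) ->
  set0 \in Delta -> (1 <= i)%N -> 0 < s ->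
  (i.+1)%:R * cc Delta i.+1 0 set0 s * cc Delta i.+1 2 set0 s
    <= i%:R * cc Delta i.+1 1 set0 s ^+ 2.
Proof.
move=> dc aug h0 hi sp.
have hsz : (size ([::] : seq (option E)) + 2 + i.-1 = i.+1)%N by rewrite /=; lia.
have H := hyp_all dc aug sp hsz.
set Q := fun j k => DD Delta i.+1 s [:: j; k].
have e0 : [set e in xs ([::] : seq (option E))] = set0 by apply/setP => e; rewrite !inE.
have D0 : DD Delta i.+1 s [::] = cc Delta i.+1 0 set0 s by rewrite /DD /= -e0.
have D1 : DD Delta i.+1 s [:: None] = cc Delta i.+1 1 set0 s by rewrite /DD /= -e0.
have D2 : DD Delta i.+1 s [:: None; None] = cc Delta i.+1 2 set0 s by rewrite /DD /= -e0.
pose u := fun v : option E => xpt s v.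
pose w := fun v : option E => if v is None then (1 : R) else 0.
have rowE : forall j, \sum_k DD Delta i.+1 s [:: j; k] * u k = i%:R * DD Delta i.+1 s [:: j].
  move=> j.
  have -> : \sum_k DD Delta i.+1 s [:: j; k] * u k = \sum_k xpt s k * DD Delta i.+1 s [:: k; j].
    by apply: eq_bigr => k _; rewrite mulrC; congr (_ * _); apply: DD_perm; apply: perm_swap.
  by rewrite euler /= subSS subn0.
have qu : qf (fun j k => DD Delta i.+1 s [:: j; k]) u = (i.+1)%:R * i%:R * cc Delta i.+1 0 set0 s.
  rewrite /qf /bil.
  have -> : \sum_j \sum_k DD Delta i.+1 s [:: j; k] * u j * u k =
            \sum_j xpt s j * (\sum_k DD Delta i.+1 s [:: j; k] * u k).
    apply: eq_bigr => j _; rewrite mulr_sumr; apply: eq_bigr => k _; rewrite /u; ring.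
  under eq_bigr => j _ do rewrite rowE.
  have -> : \sum_j xpt s j * (i%:R * DD Delta i.+1 s [:: j]) =
            i%:R * \sum_j xpt s j * DD Delta i.+1 s [:: j].
    by rewrite mulr_sumr; apply: eq_bigr => j _; ring.
  by rewrite euler /= subn0 D0; ring.
have bw : bil (fun j k => DD Delta i.+1 s [:: j; k]) u w = i%:R * cc Delta i.+1 1 set0 s.
  rewrite /bil.
  have -> : \sum_j \sum_k DD Delta i.+1 s [:: j; k] * u j * w k =
            \sum_j xpt s j * DD Delta i.+1 s [:: j; None].
    apply: eq_bigr => j _; rewrite sum_option /w big1 ?addr0; last by move=> e _; rewrite mulr0.
    rewrite /u; ring.
  by rewrite euler /= subSS subn0 D1.
have qw : qf (fun j k => DD Delta i.+1 s [:: j; k]) w = cc Delta i.+1 2 set0 s.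
  rewrite /qf /bil sum_option.
  have -> : \sum_e \sum_k DD Delta i.+1 s [:: Some e; k] * w (Some e) * w k = 0.
    by rewrite big1 // => e _; rewrite big1 // => k _; rewrite /w mulr0 mul0r.
  rewrite addr0 sum_option.
  have -> : \sum_e DD Delta i.+1 s [:: None; Some e] * w None * w (Some e) = 0.
    by rewrite big1 // => e _; rewrite /w mulr0.
  by rewrite addr0 /w !mulr1 D2.
have c0p : 0 < cc Delta i.+1 0 set0 s.
  rewrite /cc (bigD1 set0) /=; last by rewrite h0 sub0set.
  rewrite ltr_pwDl //.
    by apply: wt_gt0 => //; rewrite cards0.
  by apply: sumr_ge0 => I _; apply: wt_ge0; apply: ltW.
have ip : 0 < i%:R :> R by rewrite ltr0n.
have hup : 0 < qf (fun j k => DD Delta i.+1 s [:: j; k]) u.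
  by rewrite qu !mulr_gt0 // ltr0n.
have := H u w hup; rewrite qu qw bw.
move=> h.
have : i%:R * ((i.+1)%:R * cc Delta i.+1 0 set0 s * cc Delta i.+1 2 set0 s)
       <= i%:R * (i%:R * cc Delta i.+1 1 set0 s ^+ 2).
  have e1 : i%:R * ((i.+1)%:R * cc Delta i.+1 0 set0 s * cc Delta i.+1 2 set0 s) =
            (i.+1)%:R * i%:R * cc Delta i.+1 0 set0 s * cc Delta i.+1 2 set0 s by ring.
  have e2 : (i%:R * cc Delta i.+1 1 set0 s) ^+ 2 = i%:R * (i%:R * cc Delta i.+1 1 set0 s ^+ 2) by ring.
  by rewrite e1 -e2.
by rewrite ler_pM2l.
Qed.

Lemma wt_lb (R : realFieldType) r t n (s : R) :
  (t <= r)%N -> 0 < s -> (n == (r - t)%N)%:R <= wt r t n s.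
Proof.
move=> htr sp; case: (eqVneq n (r - t)%N) => [->|ne] /=.
  rewrite /wt.
  have -> : (r - t + t <= r)%N by lia.
  have -> : (r - (r - t) - t = 0)%N by lia.
  by rewrite expr0 fact0 divr1.
by apply: wt_ge0; apply: ltW.
Qed.

Lemma wt_ub (R : realFieldType) r t n (s : R) :
  0 < s -> s <= 1 -> wt r t n s <= (n == (r - t)%N)%:R + s.
Proof.
move=> sp s1; rewrite /wt; case: ifP => h; last first.
  by rewrite addr_ge0 ?ler0n ?ltW.
case: (eqVneq n (r - t)%N) => [e|ne].
  have -> : (r - n - t = 0)%N by lia.
  by rewrite expr0 fact0 divr1 /= lerDl ltW.
have hm : (0 < r - n - t)%N.
  have : n != (r - t)%N := ne. move/eqP => ne'. lia.
rewrite /= add0r.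
set m := (r - n - t)%N in hm *.
have f1 : 1 <= (m`!)%:R :> R by rewrite ler1n fact_gt0.
apply: (le_trans (y := s ^+ m)).
  rewrite ler_pdivrMr ?(lt_le_trans ltr01 f1) //.
  by apply: ler_peMr => //; rewrite exprn_ge0 // ltW.
clear f1; case: m hm => // m _; rewrite exprS.
rewrite -[X in _ <= X](mulr1 s); apply: ler_wpM2l; first exact: ltW.
by apply: exprn_ile1 => //; exact: ltW.
Qed.

Lemma sum_fvec (R : realFieldType) (E : finType) (Delta : {set {set E}}) n :
  \sum_(I in Delta | set0 \subset I) (#|I| == n)%:R = (fvec Delta n)%:R :> R.
Proof.
rewrite (eq_bigl (fun I => I \in Delta)); last by move=> I; rewrite sub0set andbT.
rewrite (eq_bigr (fun I : {set E} => if #|I| == n then (1 : R) else 0)); last by move=> I _; case: (_ == _).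
rewrite -big_mkcondr /= sumr_const /fvec.
rewrite -[#|[set A in Delta | #|A| == n]|]/(#|[set A in Delta | #|A| == n]|).
congr (_ *+ _); apply: eq_card => I; by rewrite !inE.
Qed.

Lemma cc_lb (R : realFieldType) (E : finType) (Delta : {set {set E}}) r t (s : R) :
  (t <= r)%N -> 0 < s -> (fvec Delta (r - t)%N)%:R <= cc Delta r t set0 s.
Proof.
move=> htr sp; rewrite -sum_fvec /cc; apply: ler_sum => I _; exact: wt_lb.
Qed.

Lemma cc_ub (R : realFieldType) (E : finType) (Delta : {set {set E}}) r t (s : R) :
  0 < s -> s <= 1 -> cc Delta r t set0 s <= (fvec Delta (r - t)%N)%:R + s * (#|Delta|)%:R.
Proof.
move=> sp s1; rewrite -sum_fvec /cc.
apply: (le_trans (y := \sum_(I in Delta | set0 \subset I) ((#|I| == (r - t)%N)%:R + s))).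
  by apply: ler_sum => I _; exact: wt_ub.
rewrite big_split /= lerD2l.
rewrite (eq_bigl (fun I => I \in Delta)); last by move=> I; rewrite sub0set andbT.
by rewrite sumr_const mulr_natr.
Qed.

Local Close Scope ring_scope.

Theorem mainTheorem2 (E : finType) (Delta : {set {set E}}) :
  is_matroid Delta -> realizable Delta ->
  forall i : nat, 1 <= i -> i <= (mrank Delta).-1 ->
    fvec Delta i.-1 * fvec Delta i.+1 <= fvec Delta i ^ 2.
Proof.
move=> [h0 dc aug] _ i hi _.
set A := fvec Delta i.-1; set B := fvec Delta i; set C := fvec Delta i.+1.
set N := #|Delta|.
suff key : i.+1 * (C * A) <= i * B ^ 2.
  have : i.+1 * (A * C) <= i.+1 * B ^ 2.
    rewrite [A * C]mulnC; apply: (leq_trans key); apply: leq_mul; [exact: leqnSn | exact: leqnn].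
  by rewrite leq_pmul2l.
have bN : B <= N.
  by apply: subset_leq_card; apply/subsetP => I; rewrite inE => /andP [].
pose M : nat := 3 * i * N ^ 2 + 1.
pose s : rat := (M%:R)^-1.
have Mp : (0 < M%:R :> rat)%R by rewrite ltr0n /M addn1.
have sp : (0 < s)%R by rewrite invr_gt0.
have s1 : (s <= 1)%R by rewrite invf_le1 // ler1n /M addn1.
have K := key_ineq dc aug h0 hi sp.
have l0 := cc_lb Delta (r := i.+1) (t := 0) (leq0n _) sp.
have l2 := cc_lb Delta (r := i.+1) (t := 2) (hi : 2 <= i.+1) sp.
have u1 := cc_ub Delta i.+1 1 sp s1.
rewrite subn0 in l0; rewrite (_ : (i.+1 - 2 = i.-1)%N) in l2; last by lia.
rewrite (_ : (i.+1 - 1 = i)%N) in u1; last by lia.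
rewrite -/A in l2; rewrite -/B -/N in u1; rewrite -/C in l0.
set c0 := cc Delta i.+1 0 set0 s in K l0.
set c1 := cc Delta i.+1 1 set0 s in K u1.
set c2 := cc Delta i.+1 2 set0 s in K l2.
have c1n : (0 <= c1)%R by apply: sumr_ge0 => I _; apply: wt_ge0; apply: ltW.
have Bn : ((B%:R : rat) <= N%:R)%R by rewrite ler_nat.
have sM : (s * M%:R = 1)%R by rewrite mulVf // gt_eqF.
have hM : (M%:R = 3%:R * i%:R * N%:R ^+ 2 + 1 :> rat)%R by rewrite /M natrD !natrM expr2.
suff : ((i.+1 * (C * A))%:R < (i * B ^ 2 + 1)%:R :> rat)%R.
  by rewrite ltr_nat addn1 ltnS.
rewrite natrD !natrM -expr2.
have i0 : (0 <= i%:R :> rat)%R by rewrite ler0n.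
have CA : ((C%:R : rat) * A%:R <= c0 * c2)%R.
  by apply: ler_pM; rewrite ?ler0n.
have step1 : ((i.+1)%:R * (C%:R * A%:R) <= (i.+1)%:R * (c0 * c2) :> rat)%R.
  by rewrite ler_pM2l ?ltr0n.
have step2 : (c1 ^+ 2 <= (B%:R + s * N%:R) ^+ 2 :> rat)%R.
  by rewrite ler_pXn2r // ?nnegrE // addr_ge0 ?mulr_ge0 ?ler0n ?ltW.
have step3 : ((B%:R + s * N%:R) ^+ 2 <= B%:R ^+ 2 + 3%:R * s * N%:R ^+ 2 :> rat)%R.
  have Nn : (0 <= N%:R :> rat)%R by rewrite ler0n.
  have B0 : (0 <= B%:R :> rat)%R by rewrite ler0n.
  have sN : (0 <= s * N%:R :> rat)%R by rewrite mulr_ge0 // ltW.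
  have p1 : (B%:R * (s * N%:R) <= N%:R * (s * N%:R) :> rat)%R by apply: ler_wpM2r.
  have sN2 : (0 <= s * N%:R ^+ 2 :> rat)%R by rewrite mulr_ge0 ?exprn_ge0 // ltW.
  have p2 : (s * (s * N%:R ^+ 2) <= s * N%:R ^+ 2 :> rat)%R.
    by rewrite -[X in (_ <= X)%R]mul1r; apply: ler_wpM2r.
  have e : ((B%:R + s * N%:R) ^+ 2 = B%:R ^+ 2 + 2%:R * (B%:R * (s * N%:R)) + s * (s * N%:R ^+ 2) :> rat)%R by ring.
  have e' : (3%:R * s * N%:R ^+ 2 = 2%:R * (N%:R * (s * N%:R)) + s * N%:R ^+ 2 :> rat)%R by ring.
  rewrite e e'.
  move: p1 p2; set a1 := (B%:R * (s * N%:R))%R; set a2 := (N%:R * (s * N%:R))%R;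
    set a3 := (s * (s * N%:R ^+ 2))%R; set a4 := (s * N%:R ^+ 2)%R; set a5 := (B%:R ^+ 2)%R.
  lra.
have step4 : (i%:R * (3%:R * s * N%:R ^+ 2) < 1 :> rat)%R.
  have -> : (i%:R * (3%:R * s * N%:R ^+ 2) = s * (M%:R - 1) :> rat)%R.
    by rewrite hM; ring.
  rewrite mulrBr sM mulr1; by rewrite ltrBlDr ltrDl.
have e1 : ((i.+1)%:R * (c0 * c2) = (i.+1)%:R * c0 * c2 :> rat)%R by ring.
move: step1 step2 step3 step4 K; rewrite e1.
set X := ((i.+1)%:R * (C%:R * A%:R))%R.
set Y := ((i.+1)%:R * c0 * c2)%R.
move=> st1 st2 st3 st4 KK.
have : (i%:R * c1 ^+ 2 <= i%:R * (B%:R ^+ 2 + 3%:R * s * N%:R ^+ 2) :> rat)%R.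
  by apply: ler_wpM2l => //; apply: le_trans st2 st3.
move: st4; set Z := (i%:R * (3%:R * s * N%:R ^+ 2))%R.
have -> : (i%:R * (B%:R ^+ 2 + 3%:R * s * N%:R ^+ 2) = i%:R * B%:R ^+ 2 + Z :> rat)%R.
  by rewrite /Z; ring.
move: KK st1; set W := (i%:R * c1 ^+ 2)%R.
lra.
Qed.
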